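(* Let $X$ be a Hilbert space with orthonormal basis $(e_n)_{n\in\mathbb{N}}$ and let $(\lambda_n)_{n\in\mathbb{N}}\subset\{z\in\mathbb{C}:\Re z<0\}$ be such that $(\Re\lambda_n)$ is monotonically decreasing with $\lim_{n\to\infty}\Re\lambda_n=-\infty$ and $|\operatorname{Im}\lambda_n|\le k|\Re\lambda_n|$ for some $k>0$ and all $n$. Let $Ae_n=\lambda_ne_n$ with $D(A)=\{x=\sum_nx_ne_n:\sum_n|\lambda_nx_n|^2<\infty\}$. Let $U:=X$ and $B:=A_{-1}\in\mathcal{L}(U,X_{-1})$. Then: (i) for every $u\in U$, the operator $Bu\in\mathcal{L}(\mathbb{C},X_{-1})$, $z\mapsto zBu$, is $L^\infty$-admissible for $A$; (ii) $B$ is not $L^\infty$-admissible for $A$; (iii) $\sup_{\Re\lambda>0}\|R(\lambda,A_{-1})B\|_{\mathcal{L}(U,X)}<\infty$.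
   Context: $X_{-1}$ is the completion of $X$ w.r.t. $\|(\beta-A)^{-1}\cdot\|$, $\beta\in\rho(A)$; $A_{-1}$, $T_{-1}$ are the extensions of $A$ and its semigroup $T$ to $X_{-1}$; $R(\lambda,A_{-1})=(\lambda-A_{-1})^{-1}$. An operator $B\in\mathcal{L}(U,X_{-1})$ is $L^\infty$-admissible if for every $t>0$ the map $u\mapsto\int_0^tT_{-1}(s)Bu(s)ds$ sends $L^\infty(0,t;U)$ into $X$. *)

(* Defs.v *)
From mathcomp Require Import all_boot all_algebra.
From mathcomp Require Import all_classical all_reals all_analysis.
From mathcomp Require Export complex.
Import GRing.Theory Num.Theory.
Set Implicit Arguments. Unset Strict Implicit. Unset Printing Implicit Defensive.
Local Open Scope ring_scope.
Local Open Scope classical_set_scope.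
Local Open Scope complex_scope.

Section Defs.
Variable R : realType.
Local Notation C := R[i].

Definition cabs2 (z : C) : R := (complex.Re z) ^+ 2 + (complex.Im z) ^+ 2.

Definition cexp (z : C) : C :=
  (expR (complex.Re z) * cos (complex.Im z)) +i* (expR (complex.Re z) * sin (complex.Im z)).

Definition l2norm2 (x : nat -> C) : \bar R :=
  (\sum_(0 <= n <oo) (cabs2 (x n))%:E)%E.

(** x = sum_n x_n e_n belongs to X (the Hilbert space, identified with l^2). *)
Definition in_X (x : nat -> C) : Prop := (l2norm2 x < +oo)%E.

Definition cintegral (t : R) (f : R -> C) : C :=
  (Rintegral (@lebesgue_measure R) `]0, t[ (fun s => complex.Re (f s)))
  +i* (Rintegral (@lebesgue_measure R) `]0, t[ (fun s => complex.Im (f s))).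

Definition Linf_C (t : R) (f : R -> C) : Prop :=
  [/\ measurable_fun `]0, t[ (fun s => complex.Re (f s)),
      measurable_fun `]0, t[ (fun s => complex.Im (f s)) &
      exists M : R, {ae (@lebesgue_measure R), forall s, `]0, t[ s ->
                       cabs2 (f s) <= M}].

(** u belongs to L^oo(0,t; U) with U = X = l^2 (coordinates u s n):
    (weakly, hence by Pettis strongly) measurable and essentially bounded. *)
Definition Linf_X (t : R) (u : R -> nat -> C) : Prop :=
  [/\ (forall n, measurable_fun `]0, t[ (fun s => complex.Re (u s n))),
      (forall n, measurable_fun `]0, t[ (fun s => complex.Im (u s n))) &
      exists M : R, {ae (@lebesgue_measure R), forall s, `]0, t[ s ->
                       (l2norm2 (u s) <= M%:E)%E}].

(** Elements of X_{-1} are represented by their coordinate sequences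
    (X_{-1} = { x : sum_n |x_n|^2/|beta - lambda_n|^2 < oo }).
    Given an X_{-1}-valued g, int_0^t T_{-1}(s) g(s) ds is computed
    coordinatewise (coordinate functionals are continuous on X_{-1}). *)
Definition T_m1 (lam : nat -> C) (s : R) (x : nat -> C) : nat -> C :=
  fun n => cexp (lam n * s%:C) * x n.

Definition integral_T_m1 (lam : nat -> C) (t : R) (g : R -> nat -> C)
  : nat -> C :=
  fun n => cintegral t (fun s => T_m1 lam s (g s) n).

Definition A_m1 (lam : nat -> C) (x : nat -> C) : nat -> C :=
  fun n => lam n * x n.

Definition res_A_m1 (lam : nat -> C) (z : C) (x : nat -> C) : nat -> C :=
  fun n => (z - lam n)^-1 * x n.

Definition Linf_admissible_X (lam : nat -> C) (B : (nat -> C) -> nat -> C)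
  : Prop :=
  forall t : R, 0 < t -> forall u : R -> nat -> C, Linf_X t u ->
    in_X (integral_T_m1 lam t (fun s => B (u s))).

Definition Linf_admissible_C (lam : nat -> C) (B : C -> nat -> C) : Prop :=
  forall t : R, 0 < t -> forall f : R -> C, Linf_C t f ->
    in_X (integral_T_m1 lam t (fun s => B (f s))).

End Defs.

(* Main.v *)
Require Import Defs.
From mathcomp Require Import all_boot all_algebra.
From mathcomp Require Import all_classical all_reals all_analysis.
From mathcomp Require Import complex.
From mathcomp Require Import ring lra measurable_realfun exponential_distribution.
Import GRing.Theory Num.Theory order.Order.TTheory.
Local Open Scope ring_scope.
Local Open Scope classical_set_scope.
Local Open Scope complex_scope.

Set Implicit Arguments. Unset Strict Implicit. Unset Printing Implicit Defensive.

Local Notation Re := complex.Re.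
Local Notation Im := complex.Im.
Local Notation mEFinP := measurable_realfun.measurable_EFinP.

Lemma cabs2_ge0 (R : realType) (x : R[i]) : 0 <= cabs2 x.
Proof. by rewrite /cabs2 addr_ge0 // sqr_ge0. Qed.

Lemma cabs2M (R : realType) (x y : R[i]) : cabs2 (x * y) = cabs2 x * cabs2 y.
Proof. case: x => a b; case: y => c d; rewrite /cabs2 /=. ring. Qed.

Lemma ReM (R : realType) (x y : R[i]) :
  Re (x * y) = Re x * Re y - Im x * Im y.
Proof. by case: x => a b; case: y => c d. Qed.

Lemma ImM (R : realType) (x y : R[i]) :
  Im (x * y) = Re x * Im y + Im x * Re y.
Proof. case: x => a b; case: y => c d /=. ring. Qed.

Lemma ReRC (R : realType) (x : R[i]) (s : R) : Re (x * s%:C) = Re x * s.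
Proof. case: x => a b /=. ring. Qed.

Lemma ImRC (R : realType) (x : R[i]) (s : R) : Im (x * s%:C) = Im x * s.
Proof. case: x => a b /=. ring. Qed.

Lemma cabs2_conj (R : realType) (x : R[i]) : cabs2 (x^*)%C = cabs2 x.
Proof. case: x => a b; rewrite /cabs2 /=. ring. Qed.

Lemma mul_conj (R : realType) (x : R[i]) : x * (x^*)%C = (cabs2 x)%:C.
Proof.
case: x => a b; rewrite /cabs2 /=; apply/eqP; rewrite eq_complex /=; apply/andP; split; apply/eqP; ring.
Qed.

Lemma ReC (R : realType) (c : R) (x : R[i]) : Re (c%:C * x) = c * Re x.
Proof. case: x => a b /=. ring. Qed.

Lemma ImC (R : realType) (c : R) (x : R[i]) : Im (c%:C * x) = c * Im x.
Proof. case: x => a b /=. ring. Qed.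

Lemma cabs2C (R : realType) (c : R) : cabs2 (c%:C) = c ^+ 2.
Proof. rewrite /cabs2 /=. ring. Qed.

Lemma cabs2V (R : realType) (x : R[i]) : x != 0 -> cabs2 (x^-1) = (cabs2 x)^-1.
Proof.
case: x => a b H.
have H2 : a ^+ 2 + b ^+ 2 != 0.
  apply: contra H => /eqP H; rewrite eq_complex /=.
  have : a ^+ 2 = 0 /\ b ^+ 2 = 0.
    by split; apply/eqP; rewrite eq_le sqr_ge0 andbT -H ?lerDl ?lerDr sqr_ge0.
  by case=> /eqP; rewrite sqrf_eq0 => -> /eqP; rewrite sqrf_eq0 => ->.
rewrite /cabs2 /=. field. exact: H2.
Qed.

Lemma abs_Re_le (R : realType) (x : R[i]) : `|Re x| <= Num.sqrt (cabs2 x).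
Proof.
rewrite -sqrtr_sqr; apply: ler_wsqrtr; rewrite /cabs2 lerDl sqr_ge0 //.
Qed.

Lemma abs_Im_le (R : realType) (x : R[i]) : `|Im x| <= Num.sqrt (cabs2 x).
Proof.
rewrite -sqrtr_sqr; apply: ler_wsqrtr; rewrite /cabs2 lerDr sqr_ge0 //.
Qed.

Lemma sqrt_cabs2M (R : realType) (x y : R[i]) :
  Num.sqrt (cabs2 (x * y)) = Num.sqrt (cabs2 x) * Num.sqrt (cabs2 y).
Proof. by rewrite cabs2M sqrtrM // cabs2_ge0. Qed.

Lemma cabs2_cexp (R : realType) (z : R[i]) : cabs2 (cexp z) = expR (Re z) ^+ 2.
Proof.
rewrite /cabs2 /cexp /= !exprMn -mulrDr cos2Dsin2 mulr1 //.
Qed.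

Lemma sqrt_cabs2_cexp (R : realType) (z : R[i]) :
  Num.sqrt (cabs2 (cexp z)) = expR (Re z).
Proof. by rewrite cabs2_cexp sqrtr_sqr ger0_norm // expR_ge0. Qed.
Lemma ae_mono (R : realType) (P Q : R -> Prop) :
  {ae (@lebesgue_measure R), forall x, P x} -> (forall x, P x -> Q x) ->
  {ae (@lebesgue_measure R), forall x, Q x}.
Proof.
move=> [N [mN N0 HN]] PQ; exists N; split => // x /= nQ; apply: HN => /= Px.
by apply: nQ; exact: PQ.
Qed.

Lemma Rint_abs_le (R : realType) (t c : R) (g h : R -> R) :
  measurable_fun `]0, t[ g -> measurable_fun `]0, t[ h -> (forall s, 0 <= h s) ->
  {ae (@lebesgue_measure R), forall s, `]0, t[ s -> `|g s| <= h s} ->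
  (\int[lebesgue_measure]_(s in `]0%R, t[) (h s)%:E <= c%:E)%E ->
  `|Rintegral lebesgue_measure `]0, t[ g| <= c.
Proof.
move=> mg mh h0 gh hc.
have mD : measurable (`]0, t[ : set R) by [].
have Hi : (\int[lebesgue_measure]_(s in `]0%R, t[) (`|g s|)%:E <= c%:E)%E.
  apply: le_trans; last exact: hc.
  apply: ae_ge0_le_integral => //.
  - by apply/measurable_realfun.measurable_EFinP; apply: measurableT_comp.
  - by move=> s _; rewrite lee_fin.
  - exact/measurable_realfun.measurable_EFinP.
have ig : (@lebesgue_measure R).-integrable `]0, t[ (EFin \o g).
  apply/integrableP; split; first exact/measurable_realfun.measurable_EFinP.
  by apply: le_lt_trans Hi _; rewrite ltry.
have H := @le_normr_Rintegral _ _ _ (@lebesgue_measure R) _ g mD ig. apply: (le_trans H).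
rewrite -lee_fin /Rintegral fineK //.
rewrite ge0_fin_numE; first by apply: le_lt_trans Hi _; rewrite ltry.
by apply: integral_ge0 => s _; rewrite lee_fin.
Qed.
Lemma int_exp_le (R : realType) (t r : R) : 0 < r ->
  (\int[lebesgue_measure]_(s in `]0%R, t[) (expR (- r * s))%:E <= (r^-1)%:E)%E.
Proof.
move=> r0.
have mD : measurable (`]0, t[ : set R) by [].
have mp : measurable_fun setT (exponential_pdf r).
  exact: measurable_exponential_pdf.
rewrite (_ : (\int[lebesgue_measure]_(s in `]0%R, t[) (expR (- r * s))%:E = \int[lebesgue_measure]_(s in `]0%R, t[) ((r^-1)%:E * (exponential_pdf r s)%:E))%E); last first.
  apply: eq_integral => s; rewrite inE /= in_itv /= => /andP[s0 _].
  rewrite exponential_pdfE ?ltW // -EFinM mulrA mulVf ?mul1r //; by rewrite gt_eqF.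
rewrite ge0_integralZl //; last 3 first.
- exact/measurable_realfun.measurable_EFinP/measurable_funTS.
- by move=> s _; rewrite lee_fin exponential_pdf_ge0 // ltW.
- by rewrite lee_fin invr_ge0 ltW.
rewrite -[X in (_ <= X)%E]mule1 lee_pmul2l ?lte_fin ?invr_gt0 //.
rewrite -(integral_exponential_pdf r0).
apply: ge0_subset_integral => //.
- exact/measurable_realfun.measurable_EFinP.
- by move=> s _; rewrite lee_fin exponential_pdf_ge0 // ltW.
Qed.

Definition cmf (R : realType) (D : set R) (F : R -> R[i]) :=
  measurable_fun D (fun s => Re (F s)) /\ measurable_fun D (fun s => Im (F s)).

Lemma cmf_mul (R : realType) (D : set R) (F G : R -> R[i]) :
  cmf D F -> cmf D G -> cmf D (fun s => F s * G s).
Proof.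
move=> [mF1 mF2] [mG1 mG2]; split.
- rewrite (_ : (fun s => Re (F s * G s)) =
     (fun s => Re (F s) * Re (G s) - Im (F s) * Im (G s))); last first.
    by apply/funext => s; rewrite ReM.
  by apply: measurable_funB; apply: measurable_funM.
- rewrite (_ : (fun s => Im (F s * G s)) =
     (fun s => Re (F s) * Im (G s) + Im (F s) * Re (G s))); last first.
    by apply/funext => s; rewrite ImM.
  by apply: measurable_funD; apply: measurable_funM.
Qed.

Lemma cmf_cst (R : realType) (D : set R) (c : R[i]) : cmf D (fun _ => c).
Proof. by split; apply: measurable_cst. Qed.

Lemma cmf_real (R : realType) (D : set R) (f : R -> R) :
  measurable_fun D f -> cmf D (fun s => (f s)%:C).
Proof. by move=> mf; split => //=; apply: measurable_cst. Qed.

Lemma cmf_conj (R : realType) (D : set R) (F : R -> R[i]) :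
  cmf D F -> cmf D (fun s => (F s)^*%C).
Proof.
move=> [m1 m2]; split.
- rewrite (_ : (fun s => Re (F s)^*%C) = (fun s => Re (F s))) //.
  by apply/funext => s; case: (F s).
- rewrite (_ : (fun s => Im (F s)^*%C) = (fun s => - Im (F s))).
    exact: measurable_funN.
  by apply/funext => s; case: (F s).
Qed.

Lemma cmf_cexp (R : realType) (D : set R) (l : R[i]) :
  cmf D (fun s => cexp (l * s%:C)).
Proof.
split => /=.
- rewrite (_ : (fun s => Re (cexp (l * s%:C))) =
    (fun s => expR (Re l * s) * cos (Im l * s))); last first.
    by apply/funext => s; rewrite /cexp /= ReRC ImRC.
  apply: measurable_funM.
  + apply: measurableT_comp; first exact: measurable_expR.
    exact: mulrl_measurable.
  + apply: measurableT_comp; first by apply: continuous_measurable_fun; exact: continuous_cos.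
    exact: mulrl_measurable.
- rewrite (_ : (fun s => Im (cexp (l * s%:C))) =
    (fun s => expR (Re l * s) * sin (Im l * s))); last first.
    by apply/funext => s; rewrite /cexp /= ReRC ImRC.
  apply: measurable_funM.
  + apply: measurableT_comp; first exact: measurable_expR.
    exact: mulrl_measurable.
  + apply: measurableT_comp; first by apply: continuous_measurable_fun; exact: continuous_sin.
    exact: mulrl_measurable.
Qed.

Lemma l2_le (R : realType) (x y : nat -> R[i]) (C : R) : 0 <= C ->
  (forall n, cabs2 (x n) <= C * cabs2 (y n)) ->
  (l2norm2 x <= C%:E * l2norm2 y)%E.
Proof.
move=> C0 H; rewrite /l2norm2 -nneseriesZl; last by move=> n _; rewrite lee_fin cabs2_ge0.
apply: lee_nneseries => [n _ _|n _]; first by rewrite lee_fin cabs2_ge0.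
by rewrite -EFinM lee_fin.
Qed.

Lemma l2_ge0 (R : realType) (x : nat -> R[i]) : (0 <= l2norm2 x)%E.
Proof. by apply: nneseries_ge0 => n _ _; rewrite lee_fin cabs2_ge0. Qed.

Lemma in_X_le (R : realType) (x y : nat -> R[i]) (C : R) : 0 <= C ->
  (forall n, cabs2 (x n) <= C * cabs2 (y n)) -> in_X y -> in_X x.
Proof.
move=> C0 H Hy; rewrite /in_X; apply: le_lt_trans (l2_le C0 H) _.
by apply: lte_mul_pinfty => //; rewrite lee_fin.
Qed.

Lemma int_Kexp_le (R : realType) (t r K : R) : 0 <= K -> 0 < r ->
  (\int[lebesgue_measure]_(s in `]0%R, t[) (K * expR (- r * s))%:E <= (K / r)%:E)%E.
Proof.
move=> K0 r0.
have mD : measurable (`]0, t[ : set R) by [].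
under eq_integral do rewrite EFinM.
rewrite ge0_integralZl //; last first.
  apply/mEFinP; apply: measurableT_comp; first exact: measurable_expR.
  exact: mulrl_measurable.
rewrite EFinM; apply: lee_wpmul2l; first by rewrite lee_fin.
exact: int_exp_le.
Qed.

Lemma coord_bound (R : realType) (t : R) (l c : R[i]) (f : R -> R[i]) (M : R) :
  Re l < 0 -> 0 <= M ->
  cmf `]0, t[ f ->
  {ae (@lebesgue_measure R), forall s, `]0, t[ s -> cabs2 (f s) <= M} ->
  cabs2 (cintegral t (fun s => cexp (l * s%:C) * (f s * c)))
    <= 2 * (M * cabs2 c / (Re l) ^+ 2).
Proof.
move=> l0 M0 mf HM.
set r := - Re l.
have r0 : 0 < r by rewrite /r oppr_gt0.
set K := Num.sqrt M * Num.sqrt (cabs2 c).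
have K0 : 0 <= K by rewrite /K mulr_ge0 // sqrtr_ge0.
set G := fun s => cexp (l * s%:C) * (f s * c).
have mG : cmf `]0, t[ G by apply: cmf_mul; [exact: cmf_cexp|apply: cmf_mul => //; exact: cmf_cst].
have hG : {ae (@lebesgue_measure R), forall s, `]0, t[ s ->
           Num.sqrt (cabs2 (G s)) <= K * expR (- r * s)}.
  apply: (ae_mono HM) => s H Ds.
  rewrite /G !sqrt_cabs2M sqrt_cabs2_cexp ReRC /r !mulNr opprK.
  rewrite mulrC /K; apply: ler_wpM2r; first exact: expR_ge0.
  apply: ler_wpM2r; first exact: sqrtr_ge0.
  by apply: ler_wsqrtr; apply: H.
have hint := int_Kexp_le t K0 r0.
have hmeas : measurable_fun `]0, t[ (fun s => K * expR (- r * s)).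
  apply: measurable_funM; first exact: measurable_cst.
  apply: measurableT_comp; first exact: measurable_expR.
  exact: mulrl_measurable.
have hpos : forall s, 0 <= K * expR (- r * s) by move=> s; rewrite mulr_ge0 // expR_ge0.
have B1 : `|Rintegral lebesgue_measure `]0, t[ (fun s => Re (G s))| <= K / r.
  apply: Rint_abs_le hmeas hpos _ hint; first exact: mG.1.
  by apply: (ae_mono hG) => s H Ds; apply: le_trans (H Ds); exact: abs_Re_le.
have B2 : `|Rintegral lebesgue_measure `]0, t[ (fun s => Im (G s))| <= K / r.
  apply: Rint_abs_le hmeas hpos _ hint; first exact: mG.2.
  by apply: (ae_mono hG) => s H Ds; apply: le_trans (H Ds); exact: abs_Im_le.
have E : (K / r) ^+ 2 = M * cabs2 c / (Re l) ^+ 2.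
  rewrite expr_div_n /K exprMn !sqr_sqrtr // ?cabs2_ge0 // /r sqrrN //.
rewrite -E /cabs2 /cintegral /= -/G.
move: B1 B2; rewrite !ler_norml => /andP[B1 B1'] /andP[B2 B2'].
nra.
Qed.

Lemma cabs2_lam_le (R : realType) (l : R[i]) (k : R) :
  `|Im l| <= k * `|Re l| -> 0 < k -> cabs2 l <= (1 + k ^+ 2) * (Re l) ^+ 2.
Proof.
move=> H k0; rewrite /cabs2.
have nb := normr_ge0 (Im l).
have H2 : `|Im l| ^+ 2 <= (k * `|Re l|) ^+ 2 by nra.
move: H2; rewrite exprMn !(real_normK (num_real _)) => H2; nra.
Qed.

Lemma part_i (R : realType) (lam : nat -> R[i]) (k : R) :
  (forall n, Re (lam n) < 0) -> 0 < k ->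
  (forall n, `|Im (lam n)| <= k * `|Re (lam n)|) ->
  forall u : nat -> R[i], in_X u ->
     Linf_admissible_C lam (fun z : R[i] => fun n => z * A_m1 lam u n).
Proof.
move=> neg k0 bnd u Hu t t0 f [mRe mIm [M HM]].
have M0 : 0 <= Num.max M 0 by rewrite le_max lexx orbT.
have HM' : {ae (@lebesgue_measure R), forall s, `]0, t[ s -> cabs2 (f s) <= Num.max M 0}.
  by apply: (ae_mono HM) => s H Ds; rewrite le_max H.
apply: (@in_X_le _ _ _ (2 * (Num.max M 0 * (1 + k ^+ 2)))) Hu.
  by rewrite mulr_ge0 // mulr_ge0 // addr_ge0 // sqr_ge0.
move=> n.
rewrite /integral_T_m1 /T_m1 /A_m1.
apply: le_trans (coord_bound (lam n * u n) (neg n) M0 _ HM') _.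
  by split.
rewrite -[X in _ <= X]mulrA ler_pM2l // cabs2M.
have L := cabs2_lam_le (bnd n) k0.
have a0 : 0 < Re (lam n) ^+ 2 by have := neg n; nra.
rewrite ler_pdivrMr //.
have X0 := cabs2_ge0 (u n).
have L2 : 0 <= (1 + k ^+ 2) * Re (lam n) ^+ 2 - cabs2 (lam n) by rewrite subr_ge0.
have := mulr_ge0 (mulr_ge0 M0 X0) L2.
nra.
Qed.


Lemma part_iii (R : realType) (lam : nat -> R[i]) (k : R) :
  (forall n, Re (lam n) < 0) -> 0 < k ->
  (forall n, `|Im (lam n)| <= k * `|Re (lam n)|) ->
  exists M : R, forall z : R[i], 0 < Re z ->
        forall x : nat -> R[i], in_X x ->
          (l2norm2 (res_A_m1 lam z (A_m1 lam x)) <= M%:E * l2norm2 x)%E.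
Proof.
move=> neg k0 bnd; exists (1 + k ^+ 2) => z z0 x _.
apply: l2_le; first by rewrite addr_ge0 // sqr_ge0.
move=> n; rewrite /res_A_m1 /A_m1.
have L := cabs2_lam_le (bnd n) k0.
have an := neg n.
have D1 : Re (lam n) ^+ 2 <= cabs2 (z - lam n).
  move: an z0; case: (lam n) => a b; case: z => c d; rewrite /cabs2 /= => an z0.
  have h1 : 0 <= c * (c - 2 * a) by apply: mulr_ge0; nra.
  have h2 := sqr_ge0 (d - b). nra.
have a0 : 0 < Re (lam n) ^+ 2 by nra.
have c0 : 0 < cabs2 (z - lam n) by apply: lt_le_trans D1.
have nz : z - lam n != 0.
  by apply: contraTneq c0 => ->; rewrite /cabs2 /= expr0n /= addr0 ltxx.
rewrite !cabs2M cabs2V // mulrC ler_pdivrMr //.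
have X0 := cabs2_ge0 (x n).
have L2 : 0 <= (1 + k ^+ 2) * Re (lam n) ^+ 2 - cabs2 (lam n) by rewrite subr_ge0.
have k2 : 0 <= 1 + k ^+ 2 by rewrite addr_ge0 // sqr_ge0.
have := mulr_ge0 X0 L2.
have D2 : 0 <= cabs2 (z - lam n) - Re (lam n) ^+ 2 by rewrite subr_ge0.
have := mulr_ge0 (mulr_ge0 X0 k2) D2.
nra.
Qed.

Lemma Rint_lb (R : realType) (D I : set R) (g : R -> R) (m K : R) :
  measurable D -> measurable I -> I `<=` D ->
  (lebesgue_measure D < +oo)%E -> measurable_fun D g ->
  (forall s, D s -> 0 <= g s <= K) -> 0 <= m -> (forall s, I s -> m <= g s) ->
  (m%:E * lebesgue_measure I <= (Rintegral lebesgue_measure D g)%:E)%E.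
Proof.
move=> mD mI ID Dfin mg gK m0 gm.
have g0 : forall s, D s -> (0 <= (g s)%:E)%E.
  by move=> s Ds; rewrite lee_fin; case/andP: (gK s Ds).
have mg' : measurable_fun D (fun s => (g s)%:E) by exact/mEFinP.
have up : (\int[lebesgue_measure]_(s in D) (g s)%:E <= K%:E * lebesgue_measure D)%E.
  rewrite -integral_cst //; apply: ge0_le_integral => //.
  by move=> s Ds; rewrite lee_fin; case/andP: (gK s Ds).
have fin : (\int[lebesgue_measure]_(s in D) (g s)%:E)%E \is a fin_num.
  rewrite ge0_fin_numE; last by apply: integral_ge0.
  apply: le_lt_trans up _.
  rewrite lt_neqAle leey andbT; apply/negP => /eqP/esym Hy.
  have : (K%:E * lebesgue_measure D)%E \is a fin_num.
    by rewrite fin_numM // ge0_fin_numE // measure_ge0.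
  by rewrite -Hy.
rewrite /Rintegral fineK //.
have HS := ge0_subset_integral lebesgue_measure mI mD mg' g0 ID.
apply: (le_trans _ HS).
have HC := integral_cst lebesgue_measure mI m%:E. rewrite -HC. apply: ge0_le_integral => //.
- apply: measurable_funS mg' => //.
Qed.

Lemma series_single (R : realType) (f : nat -> \bar R) (n0 : nat) :
  (forall n, (0 <= f n)%E) -> (forall n, n != n0 -> f n = 0%E) ->
  (\sum_(0 <= n <oo) f n = f n0)%E.
Proof.
move=> f0 fz.
rewrite (@nneseriesD1 _ f n0 xpredT) //; rewrite eseries0 ?adde0 // => i _ /andP[_ H].
exact: fz.
Qed.

Lemma subseq_exists (R : realType) (lam : nat -> R[i]) :
  (forall n, Re (lam n) < 0) ->
  (forall n m, (n <= m)%N -> Re (lam m) <= Re (lam n)) ->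
  (fun n => Re (lam n)) @ \oo --> -oo ->
  exists nj : nat -> nat,
    [/\ forall j, 2 <= - Re (lam (nj j)),
        forall j j', (j < j')%N -> 2 * - Re (lam (nj j)) <= - Re (lam (nj j')) &
        forall j, (j <= nj j)%N].
Proof.
move=> neg mono cv.
have HN : forall T : R, exists n, T <= - Re (lam n).
  move=> T; have [N _ HN] := cvgrNy_le cv (- T).
  by exists N; rewrite lerNr; apply: HN => /=.
have [Nf HNf] := choice HN.
pose nj := fix nj j := if j is j'.+1 then Nf (2 * - Re (lam (nj j'))) else Nf 2.
have F0 : 2 <= - Re (lam (nj 0%N))  by exact: HNf.
have FS : forall j, 2 * - Re (lam (nj j)) <= - Re (lam (nj j.+1)) by move=> j; exact: HNf.
have F2 : forall j, 2 <= - Re (lam (nj j)).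
  elim=> [//|j IH]; apply: le_trans (FS j); lra.
exists nj; split => //.
- move=> j j'; elim: j' => [//|j' IH].
  rewrite ltnS leq_eqVlt => /orP[/eqP ->|/IH H]; first exact: FS.
  apply: le_trans (FS j'); have := F2 j'; lra.
- elim=> [//|j IH].
  have : (nj j < nj j.+1)%N.
    rewrite ltnNge; apply/negP => H.
    have := mono _ _ H; have := FS j; have := F2 j; lra.
  by move=> H; apply: leq_ltn_trans H.
Qed.

Lemma integrand_eq (R : realType) (E l : R[i]) (c : R) :
  E * (l * (c%:C * (E * l)^*%C)) = (c * cabs2 (E * l))%:C.
Proof.
case: E => p q; case: l => a b; apply/eqP; rewrite eq_complex /cabs2 /=.
by apply/andP; split; apply/eqP; ring.
Qed.

Lemma inI (R : realType) (r s : R) : 0 < r ->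
  (`[r^-1, 2 * r^-1[ : set R) s -> 1 <= r * s /\ r * s < 2 /\ 0 < s.
Proof.
move=> r0; rewrite /= in_itv /= => /andP[h1 h2].
have ri : 0 < r^-1 by rewrite invr_gt0.
split; last split.
- by rewrite -(mulfV (lt0r_neq0 r0)) ler_pM2l.
- by rewrite -(ltr_pM2l ri) mulrA mulVf ?mul1r ?lt0r_neq0 // mulrC.
- exact: lt_le_trans h1.
Qed.

Lemma part_ii (R : realType) (lam : nat -> R[i]) (k : R) :
  (forall n, Re (lam n) < 0) ->
  (forall n m, (n <= m)%N -> Re (lam m) <= Re (lam n)) ->
  (fun n => Re (lam n)) @ \oo --> -oo ->
  0 < k ->
  (forall n, `|Im (lam n)| <= k * `|Re (lam n)|) ->
  ~ Linf_admissible_X lam (A_m1 lam).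
Proof.
move=> neg mono cv k0 bnd.
have [nj [F2 FS Fge]] := subseq_exists neg mono cv.
pose r := fun n => - Re (lam n).
have r0 : forall n, 0 < r n by move=> n; rewrite /r oppr_gt0.
pose sel := fun n => exists j, n = nj j.
pose I := fun n => (`[(r n)^-1, 2 * (r n)^-1[ : set R).
have mI : forall n, measurable (I n) by move=> n; exact: measurable_itv.
pose ind := fun n s => \1_(I n) s * (if `[< sel n >] then 1 else 0) : R.
pose u := fun s n => ((ind n s) / r n)%:C * (cexp (lam n * s%:C) * lam n)^*%C.
have disj : forall n m s, sel n -> sel m -> I n s -> I m s -> n = m.
  move=> n m s [j ->] [j' ->] /(inI (r0 _)) [h1 [h2 h3]] /(inI (r0 _)) [h1' [h2' h3']].
  case: (ltngtP j j') => [jj|jj|-> //].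
  - have := ler_wpM2r (ltW h3) (FS _ _ jj) => H; exfalso.
    move: h1 h2' h3 H; rewrite /r; generalize (- Re (lam (nj j))) (- Re (lam (nj j'))) s.
    by clear => a b x *; lra.
  - have := ler_wpM2r (ltW h3) (FS _ _ jj) => H; exfalso.
    move: h1' h2 h3 H; rewrite /r; generalize (- Re (lam (nj j))) (- Re (lam (nj j'))) s.
    by clear => a b x *; lra.
have indz : forall n s, ~ (sel n /\ I n s) -> ind n s = 0.
  move=> n s H; rewrite /ind; case: (pselect (I n s)) => Is.
    by case: ifP => [/asboolP sn|_]; [exfalso; exact: H|rewrite mulr0].
  by rewrite indicE memNset // mul0r.
have ind1 : forall n s, sel n -> I n s -> ind n s = 1.
  move=> n s sn Is; rewrite /ind indicE mem_set // ifT ?mulr1 //.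
  exact/asboolP.
have cabu : forall s n, cabs2 (u s n) =
    (ind n s / r n) ^+ 2 * (expR (Re (lam n) * s) ^+ 2 * cabs2 (lam n)).
  by move=> s n; rewrite /u !cabs2M cabs2_conj cabs2C cabs2M cabs2_cexp ReRC.
have L : forall n, cabs2 (lam n) <= (1 + k ^+ 2) * r n ^+ 2.
  by move=> n; rewrite /r sqrrN; exact: cabs2_lam_le.
have ubound : forall s n, cabs2 (u s n) <= 1 + k ^+ 2.
  move=> s n; rewrite cabu; case: (pselect (sel n /\ I n s)) => [[sn Is]|H].
  - rewrite ind1 //; have [_ [_ s0]] := inI (r0 n) Is.
    have e1 : expR (Re (lam n) * s) <= 1.
      by rewrite -expR0 ler_expR; have := neg n; nra.
    have e0 := expR_ge0 (Re (lam n) * s).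
    have e2 : expR (Re (lam n) * s) ^+ 2 <= 1 by nra.
    have e20 : 0 <= expR (Re (lam n) * s) ^+ 2 by rewrite sqr_ge0.
    have Ln := L n; have rn := r0 n; have c0 := cabs2_ge0 (lam n).
    rewrite div1r exprVn mulrC ler_pdivrMr ?exprn_gt0 //.
    move: e2 e20 Ln rn c0; generalize (expR (Re (lam n) * s) ^+ 2) (cabs2 (lam n)) (r n).
    by clear => a b c *; nra.
  - by rewrite indz // mul0r expr0n /= mul0r addr_ge0 // sqr_ge0.
have u0 : forall s n, ind n s = 0 -> cabs2 (u s n) = 0.
  by move=> s n H; rewrite cabu H mul0r expr0n /= mul0r.
have cmf_u : forall n, cmf `]0, 1[ (fun s => u s n).
  move=> n; apply: cmf_mul; last by apply: cmf_conj; apply: cmf_mul;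
    [exact: cmf_cexp|exact: cmf_cst].
  apply: cmf_real; apply: measurable_funM; last exact: measurable_cst.
  apply: measurable_funM; last exact: measurable_cst.
  exact: measurable_indic.
have Lu : Linf_X 1 u.
  split; [by move=> n; exact: (cmf_u n).1|by move=> n; exact: (cmf_u n).2|].
  exists (1 + k ^+ 2); apply: aeW => s _.
  have [n0 Hn0] : exists n0, forall n, n != n0 -> ind n s = 0.
    case: (pselect (exists n0, sel n0 /\ I n0 s)) => [[n0 [sn0 In0]]|Hno].
      exists n0 => n nn0; apply: indz => -[sn In]; apply: (negP nn0); apply/eqP.
      exact: disj sn sn0 In In0.
    by exists 0%N => n _; apply: indz => H; apply: Hno; exists n.
  rewrite /l2norm2 (@series_single _ _ n0).
  - by rewrite lee_fin ubound.
  - by move=> n; rewrite lee_fin cabs2_ge0.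
  - by move=> n /Hn0 /(u0 s n) ->.
move=> /(_ 1 ltr01 u Lu) Hx.
set x := integral_T_m1 lam 1 (fun s => A_m1 lam (u s)) in Hx.
pose d := expR (-2 : R) ^+ 2.
have d0 : 0 < d by rewrite exprn_gt0 // expR_gt0.
have xlb : forall j, d ^+ 2 <= cabs2 (x (nj j)).
  move=> j; set n := nj j.
  have sn : sel n by exists j.
  have rn := r0 n; have r2 : 2 <= r n by exact: F2.
  pose g := fun s => ind n s / r n * (expR (Re (lam n) * s) ^+ 2 * cabs2 (lam n)).
  have xe : x n = cintegral 1 (fun s => (g s)%:C).
    rewrite /x /integral_T_m1 /T_m1 /A_m1; congr cintegral; apply/funext => s.
    by rewrite /u integrand_eq cabs2M cabs2_cexp ReRC.
  have ID : I n `<=` `]0, 1[.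
    move=> s /(inI rn) [h1 [h2 h3]]; rewrite /= in_itv /= h3 /=.
    move: h2 h3 r2; generalize (r n) => a; clear => *; nra.
  have Dfin : (lebesgue_measure (`]0%R, 1%R[ : set R) < +oo)%E.
    by rewrite lebesgue_measure_itv /= lte_fin ltr01 oppr0 adde0 ltry.
  have mg : measurable_fun (`]0, 1[ : set R) g.
    apply: measurable_funM.
      apply: measurable_funM; last exact: measurable_cst.
      apply: measurable_funM; last exact: measurable_cst.
      exact: measurable_indic.
    apply: measurable_funM; last exact: measurable_cst.
    apply: measurable_funX; apply: measurableT_comp; first exact: measurable_expR.
    exact: mulrl_measurable.
  have ind01 : forall s, 0 <= ind n s <= 1.
    move=> s; rewrite /ind indicE; case: (s \in I n); case: ifP => _ /=;
      by rewrite ?mulr1 ?mulr0 ?ler01 ?lexx.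
  have gK : forall s, `]0, 1[ s -> 0 <= g s <= cabs2 (lam n) / r n.
    move=> s; rewrite /= in_itv /= => /andP[s0 _].
    have e1 : expR (Re (lam n) * s) <= 1.
      by rewrite -expR0 ler_expR; have := neg n; nra.
    have e0 := expR_ge0 (Re (lam n) * s).
    have e2 : expR (Re (lam n) * s) ^+ 2 <= 1 by nra.
    have e20 : 0 <= expR (Re (lam n) * s) ^+ 2 by rewrite sqr_ge0.
    have c0 := cabs2_ge0 (lam n).
    have ri : 0 < (r n)^-1 by rewrite invr_gt0.
    have := ind01 s; rewrite /g.
    move: e2 e20 c0 ri; generalize (expR (Re (lam n) * s) ^+ 2) (cabs2 (lam n)) ((r n)^-1) (ind n s).
    clear => a b c i h1 h2 h3 h4 /andP[h5 h6].
    have h7 : 0 <= i * a by nra.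
    have h8 : i * a <= 1 by nra.
    have h9 : i * a * b <= b by nra.
    apply/andP; split; first by apply: mulr_ge0; [nra|nra].
    have -> : i * c * (a * b) = (i * a * b) * c by ring.
    by apply: ler_wpM2r => //; exact: ltW.
  have gm : forall s, I n s -> d * r n <= g s.
    move=> s Is; have [h1 [h2 h3]] := inI rn Is.
    rewrite /g ind1 // div1r [X in _ <= X]mulrC ler_pdivlMr //.
    have e1 : expR (-2) <= expR (Re (lam n) * s).
      by rewrite ler_expR; move: h2; rewrite /r; nra.
    have e0 : 0 < expR (-2 : R) := expR_gt0 _.
    have e2 : d <= expR (Re (lam n) * s) ^+ 2.
      by rewrite /d; move: e1 e0; generalize (expR (-2:R)) (expR (Re (lam n) * s)); clear => a b *; nra.
    have Lr : r n * r n <= cabs2 (lam n).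
      rewrite /r /cabs2; have := sqr_ge0 (Im (lam n)); nra.
    move: e2 Lr d0 rn; generalize (expR (Re (lam n) * s) ^+ 2) (cabs2 (lam n)) (r n).
    by clear => a b c *; nra.
  have muI : lebesgue_measure (I n) = ((r n)^-1)%:E.
    have ri : 0 < (r n)^-1 by rewrite invr_gt0.
    rewrite /I lebesgue_measure_itv /= lte_fin ifT; last by nra.
    by rewrite -EFinB; congr EFin; ring.
  have mD01 : measurable (`]0%R, 1%R[ : set R) by [].
  have := Rint_lb mD01 (mI n) ID Dfin mg gK (ltW (mulr_gt0 d0 rn)) gm.
  rewrite muI -EFinM lee_fin mulfK ?lt0r_neq0 // => H.
  rewrite xe /cabs2 /cintegral /=.
  have HA : d <= Rintegral lebesgue_measure `]0, 1[ (fun s => g s) by exact: H.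
  move: HA d0 (sqr_ge0 (Rintegral lebesgue_measure `]0, 1[ (fun _ : R => 0 : R))).
  generalize (Rintegral lebesgue_measure `]0, 1[ (fun s => g s)).
  generalize (Rintegral lebesgue_measure `]0, 1[ (fun _ : R => 0 : R)).
  move=> b a H1 H2 H3; nra.
have f0 : forall n, true -> (0 <= (cabs2 (x n))%:E)%E.
  by move=> n _; rewrite lee_fin cabs2_ge0.
have tail := nneseries_tail_cvg Hx f0.
move/fine_cvgP: tail => [Hfin Hc].
have [N1 _ HN1] := Hfin.
have [N2 _ HN2] := cvgr_lt 0 Hc (d ^+ 2) (exprn_gt0 2 d0).
pose n := nj (maxn N1 N2).
have Nn : (maxn N1 N2 <= n)%N by exact: Fge.
have t1 := HN1 n (leq_trans (leq_maxl _ _) Nn).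
have t2 := HN2 n (leq_trans (leq_maxr _ _) Nn).
have le1 : ((cabs2 (x n))%:E <= \sum_(n <= i <oo) (cabs2 (x i))%:E)%E.
  have H0 := @nneseries_lim_ge R (fun i => (cabs2 (x i))%:E) xpredT n n.+1
    (fun i _ _ => f0 i isT).
  by rewrite big_nat1 in H0.
have := xlb (maxn N1 N2); rewrite -/n.
move: le1; rewrite -(fineK t1) lee_fin => le1.
move: t2 => /= t2.
move=> H; have := le_lt_trans (le_trans H le1) t2; rewrite ltxx //.
Qed.

Unset Implicit Arguments.

Theorem proposition14 (R : realType) (lam : nat -> R[i]) (k : R) :
  (forall n, complex.Re (lam n) < 0) ->
  (forall n m, (n <= m)%N -> complex.Re (lam m) <= complex.Re (lam n)) ->
  (fun n => complex.Re (lam n)) @ \oo --> -oo ->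
  0 < k ->
  (forall n, `|complex.Im (lam n)| <= k * `|complex.Re (lam n)|) ->
  (* (i) for every u in U = X, z |-> z (B u) is L^oo-admissible *)
  (forall u : nat -> R[i], in_X u ->
     Linf_admissible_C lam (fun z : R[i] => fun n => z * A_m1 lam u n))
  (* (ii) B = A_{-1} is not L^oo-admissible *)
  /\ ~ Linf_admissible_X lam (A_m1 lam)
  (* (iii) sup_{Re z > 0} || R(z, A_{-1}) B ||_{L(U,X)} < oo *)
  /\ (exists M : R, forall z : R[i], 0 < complex.Re z ->
        forall x : nat -> R[i], in_X x ->
          (l2norm2 (res_A_m1 lam z (A_m1 lam x)) <= M%:E * l2norm2 x)%E).
Proof.
move=> neg mono cv k0 bnd; split; [|split].
- exact: (part_i neg k0 bnd).
- exact: (part_ii neg mono cv k0 bnd).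
- exact: (part_iii neg k0 bnd).
Qed.
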